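(* Let $N$, $\mathfrak n=\bigoplus_{j=1}^{m+1}V_j$, $\mathcal B=\{X_1,\dots,X_p\}$, $L$, $s$, $\ell_1$, $\ell_2$, $\mathcal S=\{Y_1,\dots,Y_n\}$, $r=p-n$, $\mathfrak h$, $H$ and $d\pi_\nu$ be as in the context (in particular $0\le s<m$ and $\ell_i([V_k,V_j])=0$ for $i=1,2$ and all $k,j\ge 2$). Let $\lambda=\lambda_{s+1,\alpha}\ell_1+\lambda_{m+1,\beta}\ell_2$ with $\lambda_{s+1,\alpha},\lambda_{m+1,\beta}$ nonzero real numbers. Then there exist homogeneous polynomials $\tilde p_1,\dots,\tilde p_n,p_1,\dots,p_r$ of degree $s$ and homogeneous polynomials $\tilde q_1,\dots,\tilde q_n,q_1,\dots,q_r$ of degree $m$ on $\mathbb R^n$, all with real coefficients, such that for $f\in C^\infty(\mathbb R^n)$ $$d\pi_\lambda(L)f=\sum_{j=1}^n\Big(\frac{\partial}{\partial t_j}+i\big(\lambda_{s+1,\alpha}\tilde p_j(t)+\lambda_{m+1,\beta}\tilde q_j(t)\big)\Big)^2f-\sum_{k=1}^r\big(\lambda_{m+1,\beta}q_k(t)+\lambda_{s+1,\alpha}p_k(t)\big)^2f.$$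
   Context: Let $N$ be a connected, simply connected nilpotent Lie group whose Lie algebra $\mathfrak n$ (identified with the left-invariant vector fields on $N$) is stratified: $\mathfrak n=\bigoplus_{j=1}^{m+1}V_j$ with finite-dimensional subspaces $V_j$, $m\ge1$, $[V_i,V_j]\subseteq V_{i+j}$ if $i+j\le m+1$, $[V_i,V_j]=0$ if $i+j>m+1$, and $V_1$ generating $\mathfrak n$ as a Lie algebra. Let $\mathcal B=\{X_1,\dots,X_p\}$ be a basis of $V_1$ and $L=\sum_{i=1}^pX_i^2$. Fix an integer $s$ with $0\le s<m$. Fix a basis $\{X_{s+1,j}\}$ of $V_{s+1}$ and an index $\alpha$, and let $\ell_1\in\mathfrak n^*$ be defined by $\ell_1|_{V_i}=0$ for $i\ne s+1$ and $\ell_1(X_{s+1,j})=\delta_{j\alpha}$. Fix a basis $\{X_{m+1,j}\}$ of $V_{m+1}$ and an index $\beta$, and let $\ell_2\in\mathfrak n^*$ be defined by $\ell_2|_{V_i}=0$ for $i\le m$ and $\ell_2(X_{m+1,j})=\delta_{j\beta}$. Assume $\ell_i([V_k,V_j])=0$ for $i=1,2$ and all $k,j\ge2$. Greedy procedure for $\ell\in\mathfrak n^*$: let $P$ initially be the set of unordered pairs $\{X_k,X_j\}\subseteq\mathcal B$ with $\ell([X_k,X_j])\ne0$, and the output set be empty. While some element of $\mathcal B$ lies in at least two pairs of $P$: choose an element lying in the maximal number of pairs of $P$, add it to the output, and delete from $P$ all pairs containing it. When every element lies in at most one pair of $P$, add to the output one arbitrarily chosen element of each remaining pair. (Any admissible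 choices may be made.) Define $\mathcal S_1,\mathcal S_2\subseteq\mathcal B$: if $s\ne1$ and $m\ne1$, $\mathcal S_1=\{X\in\mathcal B:\exists Y\in\mathfrak n,\ \ell_1([X,Y])\ne0\}$ and $\mathcal S_2=\{X\in\mathcal B:\exists Y\in\mathfrak n,\ \ell_2([X,Y])\ne0\}$; if $s=1$, $\mathcal S_1$ is the output of the greedy procedure for $\ell_1$ and $\mathcal S_2$ is as in the previous case; if $m=1$ (so $s=0$), $\mathcal S_1=\emptyset$ and $\mathcal S_2$ is the output of the greedy procedure for $\ell_2$. Let $\mathcal S=\mathcal S_1\cup\mathcal S_2=\{Y_1,\dots,Y_n\}$, $n=\#\mathcal S$, $r=p-n$. Let $W$ be the span of $\mathcal B\setminus\mathcal S$, $\mathfrak h=W\oplus V_2\oplus\cdots\oplus V_{m+1}$ (an ideal of codimension $n$), $H=\exp\mathfrak h$. For $t\in\mathbb R^n$ put $e(t)=\exp(t_1Y_1+\dots+t_nY_n)$; for $a\in N$ let $a_{\mathcal S}\in\mathbb R^n$ be the unique vector with $a\in e(a_{\mathcal S})H$. For an $\mathbb R$-linear map $\nu:\mathfrak n\to\mathbb C$, $a\in N$, $f\in C^\infty(\mathbb R^n)$, set $(\pi_\nu(a)f)(t)=\exp\big(i\,\nu(\log(e(t)\,a\,e(t+a_{\mathcal S})^{-1}))\big)f(t+a_{\mathcal S})$, where $\log$ is the inverse of $\exp$ (for real $\nu$ vanishing on $[\mathfrak h,\mathfrak h]$ this is the representation of $N$ induced from the character $e^{i\nu\circ\log}$ of $H$).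 For $X\in\mathfrak n$ set $d\pi_\nu(X)f=\frac{d}{d\tau}\big|_{\tau=0}\pi_\nu(\exp\tau X)f$, and $d\pi_\nu(L)=\sum_{i=1}^p d\pi_\nu(X_i)^2$. *)

(* Defs.v *)
From HB Require Import structures.
From mathcomp Require Import all_boot all_order all_algebra.
From mathcomp Require Import all_classical all_reals all_analysis.
From mathcomp Require Import complex.
Set Implicit Arguments. Unset Strict Implicit. Unset Printing Implicit Defensive.
Import Order.TTheory GRing.Theory Num.Theory.
Import numFieldNormedType.Exports.
Local Open Scope ring_scope.

Section Complex_helpers.
Variable R : realType.

Definition cRe (z : R[i]) : R := let: Complex a _ := z in a.
Definition cIm (z : R[i]) : R := let: Complex _ b := z in b.

Definition expi (th : R) : R[i] := Complex (cos th) (sin th).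

Definition cderive (g : R -> R[i]) (x : R) : R[i] :=
  Complex (derive1 (fun y => cRe (g y)) x) (derive1 (fun y => cIm (g y)) x).

Definition rC (a : R) : R[i] := Complex a 0.
Definition iC (a : R) : R[i] := Complex 0 a.

Definition partial (n : nat) (j : 'I_n) (f : 'rV[R]_n -> R[i]) (t : 'rV[R]_n) : R[i] :=
  cderive (fun tau => f (t + tau *: delta_mx 0 j)) 0.

Definition smooth (n : nat) (f : 'rV[R]_n -> R[i]) : Prop :=
  forall js : seq 'I_n,
    let g := foldr (@partial n) f js in
    [/\ continuous (fun t => cRe (g t)), continuous (fun t => cIm (g t)) &
       forall t (j : 'I_n),
         derivable (fun tau : R => cRe (g (t + tau *: delta_mx 0 j))) 0 1 /\
         derivable (fun tau : R => cIm (g (t + tau *: delta_mx 0 j))) 0 1].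

Definition homog_poly (n k : nat) (P : 'rV[R]_n -> R) : Prop :=
  exists cf : {ffun 'I_n -> 'I_k.+1} -> R,
    forall t, P t = \sum_(a : {ffun 'I_n -> 'I_k.+1} | (\sum_(j < n) (a j : nat))%N == k)
                      cf a * \prod_(j < n) t 0 j ^+ a j.
End Complex_helpers.

Section Lie.
Variable R : realType.
(** The Lie algebra n is R^d (row vectors); its bracket is given by
    structure constants c i j = [e_i, e_j]. *)
Variable d : nat.
Variable c : 'I_d -> 'I_d -> 'rV[R]_d.

Definition br (x y : 'rV[R]_d) : 'rV[R]_d :=
  \sum_(i < d) \sum_(j < d) (x 0 i * y 0 j) *: c i j.

Definition lie_algebra : Prop :=
  (forall x, br x x = 0) /\
  (forall x y z, br x (br y z) + br y (br z x) + br z (br x y) = 0).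

(** grading: coordinate i has degree deg i; V_j = span of e_i with deg i = j *)
Variable deg : 'I_d -> nat.
Definition inV (j : nat) (x : 'rV[R]_d) : bool :=
  [forall i, (deg i != j) ==> (x 0 i == 0)].

Definition stratified (m : nat) : Prop :=
  [/\ forall i, (1 <= deg i <= m.+1)%N,
      (* [V_a, V_b] <= V_(a+b)  (which is {0} when a+b > m+1) *)
      forall (a b : nat) x y, inV a x -> inV b y -> inV (a + b) (br x y) &
      (* V_1 generates n as a Lie algebra *)
      forall P : 'rV[R]_d -> Prop,
        P 0 -> (forall x y, P x -> P y -> P (x + y)) ->
        (forall (a : R) x, P x -> P (a *: x)) ->
        (forall x y, P x -> P y -> P (br x y)) ->
        (forall x, inV 1 x -> P x) -> forall x, P x].

Definition proj1 (x : 'rV[R]_d) : 'rV[R]_d :=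
  \row_i (if deg i == 1%N then x 0 i else 0).

Definition lf (l x : 'rV[R]_d) : R := \sum_(i < d) x 0 i * l 0 i.

Definition is_basis_of (P : 'rV[R]_d -> bool) (k : nat) (B : 'I_k -> 'rV[R]_d) : Prop :=
  [/\ forall i, P (B i),
      forall a : 'I_k -> R, \sum_(i < k) a i *: B i = 0 -> forall i, a i = 0 &
      forall x, P x -> exists a : 'I_k -> R, x = \sum_(i < k) a i *: B i].

(** Baker-Campbell-Hausdorff product in Dynkin's form, truncated to words of
    length <= K (exact when n is nilpotent of step <= K):
    log(exp X exp Y) = sum_n (-1)^(n-1)/n sum_{r_i+s_i>0}
       [X^r1 Y^s1 ... X^rn Y^sn] / ((sum (r_i+s_i)) prod r_i! s_i!) *)
Fixpoint nest (X Y : 'rV[R]_d) (w : seq bool) : 'rV[R]_d :=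
  match w with
  | [::] => 0
  | a :: w' => if w' is [::] then (if a then X else Y)
               else br (if a then X else Y) (nest X Y w')
  end.

Variable K : nat.
Definition dyn_word k (rs : {ffun 'I_k -> 'I_K.+1 * 'I_K.+1}) : seq bool :=
  flatten [seq nseq (rs i).1 true ++ nseq (rs i).2 false | i <- enum 'I_k].
Definition dyn_tot k (rs : {ffun 'I_k -> 'I_K.+1 * 'I_K.+1}) : nat :=
  (\sum_(i < k) ((rs i).1 + (rs i).2))%N.
Definition dyn_ok k (rs : {ffun 'I_k -> 'I_K.+1 * 'I_K.+1}) : bool :=
  [forall i, (0 < (rs i).1 + (rs i).2)%N] && (dyn_tot rs <= K)%N.

Definition bch (X Y : 'rV[R]_d) : 'rV[R]_d :=
  \sum_(k < K) (((-1) ^+ k / (k.+1)%:R) *: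
     \sum_(rs : {ffun 'I_k.+1 -> 'I_K.+1 * 'I_K.+1} | dyn_ok rs)
        (((dyn_tot rs)%:R * \prod_(i < k.+1) (((rs i).1)`! * ((rs i).2)`!)%:R)^-1
          *: nest X Y (dyn_word rs))).

Variable p : nat.
Variable X : 'I_p -> 'rV[R]_d.

(** Greedy procedure.  A set of unordered pairs is encoded as a symmetric set
    of ordered pairs; cnt P x = number of pairs of P containing x. *)
Definition cnt (P : {set 'I_p * 'I_p}) (x : 'I_p) : nat := #|[set y | (x, y) \in P]|.

Inductive greedy : {set 'I_p * 'I_p} -> {set 'I_p} -> {set 'I_p} -> Prop :=
| greedy_step P O (S : {set 'I_p}) (x : 'I_p) :
    (exists y, 2 <= cnt P y)%N ->
    (forall y, cnt P y <= cnt P x)%N ->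
    greedy [set u in P | (u.1 != x) && (u.2 != x)] (x |: O) S ->
    greedy P O S
| greedy_stop P O (T : {set 'I_p}) :
    (forall y, cnt P y <= 1)%N ->
    (forall x y, (x, y) \in P -> (x \in T) != (y \in T)) ->
    (forall x, x \in T -> exists y, (x, y) \in P) ->
    greedy P O (O :|: T).

Definition greedy_output (l : 'rV[R]_d) (S : {set 'I_p}) : Prop :=
  greedy [set u | lf l (br (X u.1) (X u.2)) != 0] finset.set0 S.

Definition support_set (l : 'rV[R]_d) (S : {set 'I_p}) : Prop :=
  forall k, k \in S <-> exists Y, lf l (br (X k) Y) != 0.

(** the ideal h = span(B \ S) + V_2 + ... + V_(m+1) *)
Variable S : {set 'I_p}.
Definition in_h (x : 'rV[R]_d) : Prop :=
  exists a : 'I_p -> R, proj1 x = \sum_(k < p | k \notin S) a k *: X k.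

Variable n : nat.
Variable Y : 'I_n -> 'I_p.

(** group elements are represented by their logarithms; the product is bch,
    the inverse is negation. e(t) = exp(t_1 Y_1 + ... + t_n Y_n). *)
Definition eS (t : 'rV[R]_n) : 'rV[R]_d := \sum_(j < n) t 0 j *: X (Y j).

(** a_S: the (unique) t with a in e(t) H, i.e. log(e(t)^{-1} a) in h *)
Definition aS (a : 'rV[R]_d) : 'rV[R]_n :=
  match pselect (exists t : 'rV[R]_n, in_h (bch (- eS t) a)) with
  | left h => projT1 (cid h)
  | right _ => 0
  end.

Definition pi (nu : 'rV[R]_d) (a : 'rV[R]_d) (f : 'rV[R]_n -> R[i]) (t : 'rV[R]_n) : R[i] :=
  expi (lf nu (bch (bch (eS t) a) (- eS (t + aS a)))) * f (t + aS a).

Definition dpi (nu : 'rV[R]_d) (Z : 'rV[R]_d) (f : 'rV[R]_n -> R[i]) (t : 'rV[R]_n) : R[i] :=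
  cderive (fun tau => pi nu (tau *: Z) f t) 0.

Definition dpiL (nu : 'rV[R]_d) (f : 'rV[R]_n -> R[i]) (t : 'rV[R]_n) : R[i] :=
  \sum_(i < p) dpi nu (X i) (dpi nu (X i) f) t.
End Lie.

Definition Dphi (R : realType) (n : nat) (j : 'I_n) (phi : 'rV[R]_n -> R)
  (f : 'rV[R]_n -> R[i]) (t : 'rV[R]_n) : R[i] :=
  partial j f t + iC (phi t) * f t.

(* Main.v *)
Require Import Defs.
From HB Require Import structures.
From mathcomp Require Import all_boot all_order all_algebra.
From mathcomp Require Import all_classical all_reals all_analysis.
From mathcomp Require Import complex.
From mathcomp Require Import ring lra.
Import Order.TTheory GRing.Theory Num.Theory.
Set Implicit Arguments. Unset Strict Implicit. Unset Printing Implicit Defensive.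
Local Open Scope ring_scope.

Definition HP (R : realType) (n k : nat) (P : 'rV[R]_n -> R -> R) : Prop :=
  exists L : seq (R * seq 'I_n * nat),
    all (fun e => size e.1.2 + e.2 == k)%N L /\
    forall t x, P t x = \sum_(e <- L) e.1.1 * (\prod_(v <- e.1.2) t 0 v) * x ^+ e.2.

Lemma HP_ext (R : realType) n k (P Q : 'rV[R]_n -> R -> R) :
  HP k P -> (forall t x, P t x = Q t x) -> HP k Q.
Proof. by move=> [L [h1 h2]] e; exists L; split=> // t x; rewrite -e. Qed.

Lemma HP0 (R : realType) n k : HP k (fun (_ : 'rV[R]_n) (_ : R) => 0).
Proof. by exists [::]; split=> // t x; rewrite big_nil. Qed.

Lemma HPD (R : realType) n k (P Q : 'rV[R]_n -> R -> R) :
  HP k P -> HP k Q -> HP k (fun t x => P t x + Q t x).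
Proof.
move=> [L1 [a1 e1]] [L2 [a2 e2]]; exists (L1 ++ L2); split.
  by rewrite all_cat a1 a2.
by move=> t x /=; rewrite big_cat /= e1 e2.
Qed.

Lemma HPZ (R : realType) n k (a : R) (P : 'rV[R]_n -> R -> R) :
  HP k P -> HP k (fun t x => a * P t x).
Proof.
move=> [L [h e]]; exists [seq (a * u.1.1, u.1.2, u.2) | u <- L]; split.
  by rewrite all_map.
move=> t x /=; rewrite e big_map mulr_sumr; apply: eq_bigr => u _ /=.
by rewrite !mulrA.
Qed.

Lemma HPM (R : realType) n k1 k2 (P Q : 'rV[R]_n -> R -> R) :
  HP k1 P -> HP k2 Q -> HP (k1 + k2) (fun t x => P t x * Q t x).
Proof.
move=> [L1 [a1 e1]] [L2 [a2 e2]].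
exists [seq (u.1.1 * v.1.1, u.1.2 ++ v.1.2, (u.2 + v.2)%N) | u <- L1, v <- L2].
split.
  apply/allP => z /allpairsP [[u v] /= [hu hv ->]] /=.
  move/allP: a1 => /(_ u hu) /eqP <-. move/allP: a2 => /(_ v hv) /eqP <-.
  by rewrite size_cat; apply/eqP; ring.
move=> t x /=; rewrite e1 e2 big_allpairs_dep mulr_suml; apply: eq_bigr => u _.
rewrite mulr_sumr; apply: eq_bigr => v _ /=.
rewrite big_cat /= exprD; ring.
Qed.

Lemma HP_t (R : realType) n (j : 'I_n) : HP 1 (fun (t : 'rV[R]_n) (_ : R) => t 0 j).
Proof.
exists [:: (1, [:: j], 0%N)]; split => // t x.
by rewrite big_seq1 /= big_seq1 mul1r mulr1.
Qed.

Lemma HP_x (R : realType) n : HP 1 (fun (_ : 'rV[R]_n) (x : R) => x).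
Proof.
exists [:: (1, [::], 1%N)]; split => // t x.
by rewrite big_seq1 /= big_nil mul1r mul1r expr1.
Qed.

Lemma HP_sum (R : realType) n k (I : Type) (r : seq I) (F : I -> 'rV[R]_n -> R -> R) :
  (forall i, HP k (F i)) -> HP k (fun t x => \sum_(i <- r) F i t x).
Proof.
move=> h; elim: r => [|i r IH].
  by eapply HP_ext; first exact: HP0; move=> t x /=; rewrite big_nil.
by eapply HP_ext; first exact: (HPD (h i) IH); move=> t x /=; rewrite big_cons.
Qed.

Lemma HP_sumP (R : realType) n k (I : Type) (r : seq I) (P : pred I) (F : I -> 'rV[R]_n -> R -> R) :
  (forall i, P i -> HP k (F i)) -> HP k (fun t x => \sum_(i <- r | P i) F i t x).
Proof.
move=> h; have H : HP k (fun t x => \sum_(i <- r) (fun i t x => if P i then F i t x else 0) i t x).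
  apply: HP_sum => i /=; case Pi: (P i); first exact: h.
  exact: HP0.
by eapply HP_ext; first exact: H; move=> t x /=; rewrite [RHS]big_mkcond.
Qed.

Lemma HPZr (R : realType) n k (a : R) (P : 'rV[R]_n -> R -> R) :
  HP k P -> HP k (fun t x => P t x * a).
Proof. by move=> h; eapply HP_ext; first exact: (HPZ a h); move=> t x /=; rewrite mulrC. Qed.

Definition GP (R : realType) d (deg : 'I_d -> nat) n (G : 'rV[R]_n -> R -> 'rV[R]_d) :=
  forall k, HP (deg k) (fun t x => G t x 0 k).

Lemma GP_ext (R : realType) d (deg : 'I_d -> nat) n (G H : 'rV[R]_n -> R -> 'rV[R]_d) :
  GP deg G -> (forall t x, G t x = H t x) -> GP deg H.
Proof. by move=> h e k; eapply HP_ext; first exact: (h k); move=> t x /=; rewrite e. Qed.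

Lemma GP0 (R : realType) d (deg : 'I_d -> nat) n : GP deg (fun (_ : 'rV[R]_n) (_ : R) => (0 : 'rV[R]_d)).
Proof. by move=> k; eapply HP_ext; first exact: HP0; move=> t x /=; rewrite mxE. Qed.

Lemma GPD (R : realType) d (deg : 'I_d -> nat) n (G H : 'rV[R]_n -> R -> 'rV[R]_d) :
  GP deg G -> GP deg H -> GP deg (fun t x => G t x + H t x).
Proof. by move=> g h k; eapply HP_ext; first exact: (HPD (g k) (h k)); move=> t x /=; rewrite mxE. Qed.

Lemma GPZ (R : realType) d (deg : 'I_d -> nat) n (a : R) (G : 'rV[R]_n -> R -> 'rV[R]_d) :
  GP deg G -> GP deg (fun t x => a *: G t x).
Proof. by move=> g k; eapply HP_ext; first exact: (HPZ a (g k)); move=> t x /=; rewrite mxE. Qed.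

Lemma GPN (R : realType) d (deg : 'I_d -> nat) n (G : 'rV[R]_n -> R -> 'rV[R]_d) :
  GP deg G -> GP deg (fun t x => - G t x).
Proof. by move=> g; eapply GP_ext; first exact: (GPZ (-1) g); move=> t x /=; rewrite scaleN1r. Qed.

Lemma GP_sumP (R : realType) d (deg : 'I_d -> nat) n (I : Type) (r : seq I) (P : pred I)
  (F : I -> 'rV[R]_n -> R -> 'rV[R]_d) :
  (forall i, P i -> GP deg (F i)) -> GP deg (fun t x => \sum_(i <- r | P i) F i t x).
Proof.
move=> h k; eapply HP_ext; first exact: (@HP_sumP _ _ _ _ r P (fun i t x => F i t x 0 k) (fun i Pi => h i Pi k)).
by move=> t x /=; rewrite summxE.
Qed.

Lemma br_coord (R : realType) d (c : 'I_d -> 'I_d -> 'rV[R]_d) x y k :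
  br c x y 0 k = \sum_(i < d) \sum_(j < d) x 0 i * y 0 j * c i j 0 k.
Proof.
rewrite /br summxE; apply: eq_bigr => i _; rewrite summxE; apply: eq_bigr => j _.
by rewrite mxE.
Qed.

Lemma inV_delta (R : realType) d (deg : 'I_d -> nat) (i : 'I_d) :
  inV deg (deg i) (delta_mx 0 i : 'rV[R]_d).
Proof.
apply/forallP => k; apply/implyP => hk; rewrite mxE /=.
have -> : (k == i) = false by apply/eqP => e; rewrite e eqxx in hk.
by [].
Qed.

Lemma br_delta (R : realType) d (c : 'I_d -> 'I_d -> 'rV[R]_d) i j :
  br c (delta_mx 0 i) (delta_mx 0 j) = c i j.
Proof.
apply/rowP => k; rewrite br_coord (bigD1 i) //= [X in _ + X]big1 => [|a hai]; last first.
  by apply: big1 => b _; rewrite !mxE (negbTE hai) andbF mul0r mul0r.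
rewrite addr0 (bigD1 j) //= [X in _ + X]big1 => [|b hbj]; last first.
  by rewrite !mxE (negbTE hbj) andbF mulr0 mul0r.
by rewrite !mxE !eqxx /= !mul1r !addr0.
Qed.

Definition graded (R : realType) d (c : 'I_d -> 'I_d -> 'rV[R]_d) (deg : 'I_d -> nat) :=
  forall (a b : nat) x y, inV deg a x -> inV deg b y -> inV deg (a + b) (br c x y).

Lemma c_grad (R : realType) d (c : 'I_d -> 'I_d -> 'rV[R]_d) (deg : 'I_d -> nat) :
  graded c deg -> forall i j k, deg k != (deg i + deg j)%N -> c i j 0 k = 0.
Proof.
move=> hg i j k hk.
have := hg _ _ _ _ (inV_delta R deg i) (inV_delta R deg j).
rewrite br_delta => /forallP /(_ k) /implyP /(_ hk) /eqP //.
Qed.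

Lemma GP_br (R : realType) d (c : 'I_d -> 'I_d -> 'rV[R]_d) (deg : 'I_d -> nat) n
  (G H : 'rV[R]_n -> R -> 'rV[R]_d) :
  graded c deg -> GP deg G -> GP deg H -> GP deg (fun t x => br c (G t x) (H t x)).
Proof.
move=> hg g h k.
have HH : HP (deg k) (fun t x => \sum_(i <- index_enum 'I_d) (fun i t x => \sum_(j < d) G t x 0 i * H t x 0 j * c i j 0 k) i t x).
  apply: HP_sum => i; apply: HP_sum => j.
  case: (eqVneq (deg k) (deg i + deg j)%N) => hk.
    by rewrite hk; apply: HPZr; apply: HPM.
  by eapply HP_ext; first exact: HP0; move=> t x /=; rewrite (c_grad hg hk) mulr0.
by eapply HP_ext; first exact: HH; move=> t x /=; rewrite br_coord.
Qed.

Lemma GP_nest (R : realType) d (c : 'I_d -> 'I_d -> 'rV[R]_d) (deg : 'I_d -> nat) n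
  (G H : 'rV[R]_n -> R -> 'rV[R]_d) :
  graded c deg -> GP deg G -> GP deg H -> forall w, GP deg (fun t x => nest c (G t x) (H t x) w).
Proof.
move=> hg g h; elim => [|a w IH] /=; first exact: GP0.
case: w IH => [|b w] IH; first by case: a.
by apply: GP_br => //; case: a.
Qed.

Lemma GP_bch (R : realType) d (c : 'I_d -> 'I_d -> 'rV[R]_d) (deg : 'I_d -> nat) K n
  (G H : 'rV[R]_n -> R -> 'rV[R]_d) :
  graded c deg -> GP deg G -> GP deg H -> GP deg (fun t x => bch c K (G t x) (H t x)).
Proof.
move=> hg g h; rewrite /bch.
apply: GP_sumP => k _; apply: GPZ; apply: GP_sumP => rs _; apply: GPZ.
exact: GP_nest.
Qed.

Lemma sumn_map (T : Type) (f : T -> nat) (s : seq T) : sumn (map f s) = (\sum_(i <- s) f i)%N.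
Proof. by elim: s => [|a s IH]; rewrite ?big_nil ?big_cons //= IH. Qed.

Lemma size_dyn_word K k (rs : {ffun 'I_k -> 'I_K.+1 * 'I_K.+1}) : size (dyn_word rs) = dyn_tot rs.
Proof.
rewrite /dyn_word /dyn_tot size_flatten /shape -map_comp sumn_map big_enum /=.
by apply: eq_big => // i; rewrite size_cat !size_nseq.
Qed.

Lemma dyn_tot_ge K k (rs : {ffun 'I_k -> 'I_K.+1 * 'I_K.+1}) : dyn_ok rs -> (k <= dyn_tot rs)%N.
Proof.
case/andP => /forallP h _; rewrite /dyn_tot.
rewrite -[X in (X <= _)%N]card_ord -sum1_card.
by apply: leq_sum => i _; apply: h.
Qed.

Definition brest (R : realType) d (c : 'I_d -> 'I_d -> 'rV[R]_d) K (x y : 'rV[R]_d) : 'rV[R]_d :=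
  \sum_(k < K) (((-1) ^+ k / (k.+1)%:R) *:
     \sum_(rs : {ffun 'I_k.+1 -> 'I_K.+1 * 'I_K.+1} | dyn_ok rs && (1 < size (dyn_word rs))%N)
        (((dyn_tot rs)%:R * \prod_(i < k.+1) (((rs i).1)`! * ((rs i).2)`!)%:R)^-1
          *: nest c x y (dyn_word rs))).

Lemma enum_I1 : enum 'I_1 = [:: ord0].
Proof. by rewrite enum_ordSl enum_ord0. Qed.

Lemma bch_split (R : realType) d (c : 'I_d -> 'I_d -> 'rV[R]_d) K (x y : 'rV[R]_d) :
  (0 < K)%N -> bch c K x y = x + y + brest c K x y.
Proof.
case: K => // K _.
rewrite /bch /brest.
have E : forall k : 'I_K.+1,
  \sum_(rs : {ffun 'I_k.+1 -> 'I_K.+2 * 'I_K.+2} | dyn_ok rs)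
        (((dyn_tot rs)%:R * \prod_(i < k.+1) (((rs i).1)`! * ((rs i).2)`!)%:R)^-1
          *: nest c x y (dyn_word rs)) =
  \sum_(rs : {ffun 'I_k.+1 -> 'I_K.+2 * 'I_K.+2} | dyn_ok rs && (1 < size (dyn_word rs))%N)
        (((dyn_tot rs)%:R * \prod_(i < k.+1) (((rs i).1)`! * ((rs i).2)`!)%:R)^-1
          *: nest c x y (dyn_word rs)) +
  \sum_(rs : {ffun 'I_k.+1 -> 'I_K.+2 * 'I_K.+2} | dyn_ok rs && ~~ (1 < size (dyn_word rs))%N)
        (((dyn_tot rs)%:R * \prod_(i < k.+1) (((rs i).1)`! * ((rs i).2)`!)%:R)^-1
          *: nest c x y (dyn_word rs)).
  by move=> k; rewrite (bigID (fun rs => (1 < size (dyn_word rs))%N)).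
under eq_bigr => k _ do rewrite E scalerDr.
rewrite big_split /= addrC; congr (_ + _).
rewrite big_ord_recl [X in _ + X]big1 ?addr0; last first.
  move=> k _; rewrite big1 ?scaler0 // => rs /andP [ok]; rewrite size_dyn_word.
  have H2 : (1 < dyn_tot rs)%N by apply: leq_trans (dyn_tot_ge ok); rewrite ltnS lift0.
  by rewrite H2.
rewrite /= expr0 div1r invr1 scale1r.
pose rs10 : {ffun 'I_1 -> 'I_K.+2 * 'I_K.+2} := [ffun _ => (inord 1, inord 0)].
pose rs01 : {ffun 'I_1 -> 'I_K.+2 * 'I_K.+2} := [ffun _ => (inord 0, inord 1)].
have i1 : ((inord 1 : 'I_K.+2) : nat) = 1%N by rewrite inordK.
have i0 : ((inord 0 : 'I_K.+2) : nat) = 0%N by rewrite inordK.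
have w10 : dyn_word rs10 = [:: true].
  by rewrite /dyn_word enum_I1 /= !ffunE /= i1 i0.
have w01 : dyn_word rs01 = [:: false].
  by rewrite /dyn_word enum_I1 /= !ffunE /= i1 i0.
have t10 : dyn_tot rs10 = 1%N by rewrite /dyn_tot big_ord1 ffunE /= i1 i0.
have t01 : dyn_tot rs01 = 1%N by rewrite /dyn_tot big_ord1 ffunE /= i1 i0.
have ok10 : dyn_ok rs10 by rewrite /dyn_ok t10 andbT; apply/forallP => i; rewrite ffunE /= i1 i0.
have ok01 : dyn_ok rs01 by rewrite /dyn_ok t01 andbT; apply/forallP => i; rewrite ffunE /= i1 i0.
have ne : rs10 != rs01.
  apply/negP => /eqP /ffunP /(_ ord0); rewrite !ffunE => -[] /(congr1 val).
  by rewrite /= i1 i0.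
rewrite (bigD1 rs10) /=; last by rewrite ok10 w10.
rewrite (bigD1 rs01) /=; last by rewrite ok01 w01 eq_sym ne.
rewrite [X in _ + (_ + X)]big1 ?addr0; last first.
  move=> rs /andP [/andP [/andP [ok]]]; rewrite size_dyn_word => hs n10 n01.
  have t1 : dyn_tot rs = 1%N by apply/eqP; rewrite eqn_leq (dyn_tot_ge ok) andbT leqNgt hs.
  move: t1; rewrite /dyn_tot big_ord1 => t1.
  have [[r1 s0]|[r0 s1]] : ((rs ord0).1 = 1 :> nat /\ (rs ord0).2 = 0 :> nat)%N \/
                       ((rs ord0).1 = 0 :> nat /\ (rs ord0).2 = 1 :> nat)%N.
  - by case: (rs ord0) t1 => [[[|[|r]] ?] [[|[|s]] ?]] /= /eqP //= _; [right|left].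
  - case/negP: n10; apply/eqP/ffunP => i; rewrite ord1 ffunE.
    by case: (rs ord0) r1 s0 => r s /= hr hs'; congr pair; apply: val_inj; rewrite /= ?i1 ?i0.
  - case/negP: n01; apply/eqP/ffunP => i; rewrite ord1 ffunE.
    by case: (rs ord0) r0 s1 => r s /= hr hs'; congr pair; apply: val_inj; rewrite /= ?i1 ?i0.
rewrite w10 w01 t10 t01 /= !big_ord1 !ffunE /= i1 i0 /=.
by rewrite !mul1r invr1 !scale1r.
Qed.

Lemma br_scale (R : realType) d (c : 'I_d -> 'I_d -> 'rV[R]_d) a b x y :
  br c (a *: x) (b *: y) = (a * b) *: br c x y.
Proof.
apply/rowP => k; rewrite mxE !br_coord mulr_sumr; apply: eq_bigr => i _.
rewrite mulr_sumr; apply: eq_bigr => j _; rewrite !mxE; ring.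
Qed.

Lemma br0r (R : realType) d (c : 'I_d -> 'I_d -> 'rV[R]_d) x : br c x 0 = 0.
Proof. by have := br_scale c 1 0 x 0; rewrite scale0r mulr0 !scale0r scale1r. Qed.

Lemma nest_coll (R : realType) d (c : 'I_d -> 'I_d -> 'rV[R]_d) x a :
  br c x x = 0 -> forall w, (1 < size w)%N -> nest c x (a *: x) w = 0.
Proof.
move=> hxx; elim => [|l w IH] //=.
case: w IH => [|l2 w] IH //= _.
case: w IH => [|l3 w] IH; last by have := IH isT => /= ->; rewrite br0r.
clear IH.
  have -> : (if l then x else a *: x) = (if l then 1 else a) *: x by case: l; rewrite ?scale1r.
  have -> : (if l2 then x else a *: x) = (if l2 then 1 else a) *: x by case: l2; rewrite ?scale1r.
  by rewrite br_scale hxx scaler0.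
Qed.

Lemma brest_coll (R : realType) d (c : 'I_d -> 'I_d -> 'rV[R]_d) K x a :
  br c x x = 0 -> brest c K x (a *: x) = 0.
Proof.
move=> hxx; rewrite /brest big1 // => k _; rewrite big1 ?scaler0 // => rs /andP [_ h].
by rewrite nest_coll // scaler0.
Qed.

Lemma bch_coll (R : realType) d (c : 'I_d -> 'I_d -> 'rV[R]_d) K x a :
  (0 < K)%N -> br c x x = 0 -> bch c K x (a *: x) = x + a *: x.
Proof. by move=> hK hxx; rewrite bch_split // brest_coll // addr0. Qed.

Definition Z1 (R : realType) d (deg : 'I_d -> nat) (u : 'rV[R]_d) :=
  forall i, deg i = 1%N -> u 0 i = 0.

Lemma Z1_br (R : realType) d (c : 'I_d -> 'I_d -> 'rV[R]_d) (deg : 'I_d -> nat) u v :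
  graded c deg -> (forall i, 0 < deg i)%N -> Z1 deg (br c u v).
Proof.
move=> hg hpos k hk; rewrite br_coord big1 // => i _; rewrite big1 // => j _.
rewrite (c_grad hg) ?mulr0 // hk.
by have := hpos i; have := hpos j; case: (deg i) => [|[|?]] //; case: (deg j).
Qed.

Lemma Z1_nest (R : realType) d (c : 'I_d -> 'I_d -> 'rV[R]_d) (deg : 'I_d -> nat) x y w :
  graded c deg -> (forall i, 0 < deg i)%N -> (1 < size w)%N -> Z1 deg (nest c x y w).
Proof.
move=> hg hpos; case: w => [|l [|l2 w]] //= _.
exact: Z1_br.
Qed.

Lemma Z1_brest (R : realType) d (c : 'I_d -> 'I_d -> 'rV[R]_d) (deg : 'I_d -> nat) K x y :
  graded c deg -> (forall i, 0 < deg i)%N -> Z1 deg (brest c K x y).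
Proof.
move=> hg hpos i hi; rewrite /brest summxE big1 // => k _.
rewrite mxE summxE big1 ?mulr0 // => rs /andP [_ h].
by rewrite mxE (Z1_nest _ _ hg hpos h) // mulr0.
Qed.

Lemma proj1_bch (R : realType) d (c : 'I_d -> 'I_d -> 'rV[R]_d) (deg : 'I_d -> nat) K x y :
  graded c deg -> (forall i, 0 < deg i)%N -> (0 < K)%N ->
  proj1 deg (bch c K x y) = proj1 deg x + proj1 deg y.
Proof.
move=> hg hpos hK; rewrite bch_split //; apply/rowP => i; rewrite !mxE.
case: eqP => hi; last by rewrite addr0.
by rewrite (Z1_brest _ _ _ hg hpos) ?addr0 //; apply/eqP.
Qed.

Lemma inV_sum (R : realType) d (deg : 'I_d -> nat) j (I : Type) (r : seq I) (P : pred I)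
  (F : I -> 'rV[R]_d) : (forall i, P i -> inV deg j (F i)) -> inV deg j (\sum_(i <- r | P i) F i).
Proof.
move=> h; apply/forallP => k; apply/implyP => hk; rewrite summxE.
apply/eqP; apply: big1 => i Pi.
by have /forallP /(_ k) /implyP /(_ hk) /eqP := h i Pi.
Qed.

Lemma inV_scale (R : realType) d (deg : 'I_d -> nat) j a (x : 'rV[R]_d) :
  inV deg j x -> inV deg j (a *: x).
Proof.
move=> /forallP h; apply/forallP => k; apply/implyP => hk; rewrite mxE.
by have /implyP /(_ hk) /eqP -> := h k; rewrite mulr0.
Qed.

Lemma proj1_V1 (R : realType) d (deg : 'I_d -> nat) (v : 'rV[R]_d) :
  inV deg 1 v -> proj1 deg v = v.
Proof.
move=> /forallP h; apply/rowP => i; rewrite mxE; case: eqP => // hi.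
by have /implyP /(_ (introN eqP hi)) /eqP -> := h i.
Qed.

Lemma eS_coef (R : realType) d p (X : 'I_p -> 'rV[R]_d) n (Y : 'I_n -> 'I_p) (t : 'rV[R]_n) :
  eS X Y t = \sum_(k < p) (\sum_(j < n) (Y j == k)%:R * t 0 j) *: X k.
Proof.
rewrite /eS; symmetry; under eq_bigr => k _ do rewrite scaler_suml.
rewrite exchange_big /=; apply: eq_bigr => j _.
rewrite (bigD1 (Y j)) //= eqxx mul1r big1 ?addr0 // => k hk.
by rewrite eq_sym (negbTE hk) mul0r scale0r.
Qed.

Lemma S_img (p n : nat) (S : {set 'I_p}) (Y : 'I_n -> 'I_p) :
  (forall k, k \in S <-> exists j, Y j = k) -> S = Y @: [set: 'I_n].
Proof.
move=> h; apply/setP => k; apply/idP/imsetP.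
  by move/h => [j <-]; exists j.
by move=> [j _ ->]; apply/h; exists j.
Qed.

Lemma aS_V1 (R : realType) d (c : 'I_d -> 'I_d -> 'rV[R]_d) (deg : 'I_d -> nat) K
  p (X : 'I_p -> 'rV[R]_d) (S : {set 'I_p}) n (Y : 'I_n -> 'I_p) (u : 'I_p -> R) :
  graded c deg -> (forall i, 0 < deg i)%N -> (0 < K)%N ->
  is_basis_of (inV deg 1) X -> injective Y ->
  (forall k, k \in S <-> exists j, Y j = k) ->
  aS c deg K X S Y (\sum_(k < p) u k *: X k) = \row_j u (Y j).
Proof.
move=> hg hpos hK [hXV hXind _] hYinj hYS.
set a := \sum_(k < p) u k *: X k.
have hV1 : forall t, inV deg 1 (eS X Y t).
  by move=> t; apply: inV_sum => j _; apply: inV_scale.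
have aV1 : inV deg 1 a by apply: inV_sum => k _; apply: inV_scale.
have hSY := S_img hYS.
have pr : forall t, proj1 deg (bch c K (- eS X Y t) a) = - eS X Y t + a.
  move=> t; rewrite proj1_bch // !proj1_V1 //.
  by rewrite -scaleN1r; apply: inV_scale.
set t0 : 'rV[R]_n := \row_j u (Y j).
have wit : in_h deg X S (bch c K (- eS X Y t0) a).
  exists u; rewrite pr /a (bigID (fun k => k \in S)) /= addrA; apply/eqP.
  rewrite -subr_eq0 addrK addrC subr_eq0.
  rewrite hSY big_imset /=; last by move=> x y _ _; apply: hYinj.
  rewrite /eS; apply/eqP; apply: eq_big => [j|j _]; first by rewrite inE.
  by rewrite mxE.
have uniq : forall t, in_h deg X S (bch c K (- eS X Y t) a) -> t = t0.
  move=> t [b]; rewrite pr => hb.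
  pose co := fun k => u k - (\sum_(j < n) (Y j == k)%:R * t 0 j) - (if k \in S then 0 else b k).
  have h0 : \sum_(k < p) co k *: X k = 0.
    rewrite /co; under eq_bigr => k _ do rewrite !scalerBl.
    rewrite !sumrB -/a -eS_coef.
    have -> : \sum_(k < p) (if k \in S then 0 else b k) *: X k = \sum_(k < p | k \notin S) b k *: X k.
      by rewrite [RHS]big_mkcond /=; apply: eq_bigr => k _; case: (k \in S); rewrite ?scale0r.
    by rewrite -hb [- eS X Y t + a]addrC subrr.
  apply/rowP => j; rewrite mxE; have := hXind _ h0 (Y j).
  rewrite /co (bigD1 j) //= eqxx mul1r big1 ?addr0; last first.
    by move=> j' hj'; rewrite (inj_eq hYinj) (negbTE hj') mul0r.
  have -> : Y j \in S by apply/hYS; exists j.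
  by rewrite subr0 => /eqP; rewrite subr_eq0 => /eqP.
rewrite /aS; case: pselect => [h|[]]; last by exists t0.
by apply: uniq; exact: (projT2 (cid h)).
Qed.

Lemma aS_X (R : realType) d (c : 'I_d -> 'I_d -> 'rV[R]_d) (deg : 'I_d -> nat) K
  p (X : 'I_p -> 'rV[R]_d) (S : {set 'I_p}) n (Y : 'I_n -> 'I_p) (i : 'I_p) (tau : R) :
  graded c deg -> (forall i, 0 < deg i)%N -> (0 < K)%N ->
  is_basis_of (inV deg 1) X -> injective Y ->
  (forall k, k \in S <-> exists j, Y j = k) ->
  aS c deg K X S Y (tau *: X i) = \row_j (tau * (Y j == i)%:R).
Proof.
move=> hg hpos hK hX hY hYS.
have -> : tau *: X i = \sum_(k < p) (tau * (k == i)%:R) *: X k.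
  rewrite (bigD1 i) //= eqxx mulr1 big1 ?addr0 // => k hk.
  by rewrite (negbTE hk) mulr0 scale0r.
by rewrite aS_V1.
Qed.

Lemma GP_comb (R : realType) d (deg : 'I_d -> nat) n (I : finType) (al : I -> 'rV[R]_n -> R -> R)
  (V : I -> 'rV[R]_d) :
  (forall j, HP 1 (al j)) -> (forall j, inV deg 1 (V j)) ->
  GP deg (fun t x => \sum_(j : I) al j t x *: V j).
Proof.
move=> ha hV k.
case: (eqVneq (deg k) 1%N) => hk.
  rewrite hk; eapply HP_ext; first exact: (@HP_sum _ _ _ _ (index_enum I) (fun j t x => al j t x * V j 0 k) (fun j => HPZr _ (ha j))).
  by move=> t x /=; rewrite summxE; apply: eq_bigr => j _; rewrite mxE.
eapply HP_ext; first exact: HP0.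
move=> t x /=; rewrite summxE big1 // => j _; rewrite mxE.
by have /forallP /(_ k) /implyP /(_ hk) /eqP -> := hV j; rewrite mulr0.
Qed.

Lemma HP_lf (R : realType) d (deg : 'I_d -> nat) n (G : 'rV[R]_n -> R -> 'rV[R]_d) (l : 'rV[R]_d) (k : nat) :
  GP deg G -> (forall i, deg i != k -> l 0 i = 0) -> HP k (fun t x => lf l (G t x)).
Proof.
move=> g hl; rewrite /lf; apply: HP_sum => i.
case: (eqVneq (deg i) k) => hk.
  by rewrite -hk; apply: HPZr; apply: g.
by eapply HP_ext; first exact: HP0; move=> t x /=; rewrite hl ?mulr0.
Qed.

Definition Fph (R : realType) d (c : 'I_d -> 'I_d -> 'rV[R]_d) (deg : 'I_d -> nat) K
  p (X : 'I_p -> 'rV[R]_d) (S : {set 'I_p}) n (Y : 'I_n -> 'I_p) (i : 'I_p) (t : 'rV[R]_n) (tau : R) :=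
  bch c K (bch c K (eS X Y t) (tau *: X i)) (- eS X Y (t + aS c deg K X S Y (tau *: X i))).

Lemma GP_Fph (R : realType) d (c : 'I_d -> 'I_d -> 'rV[R]_d) (deg : 'I_d -> nat) K
  p (X : 'I_p -> 'rV[R]_d) (S : {set 'I_p}) n (Y : 'I_n -> 'I_p) (i : 'I_p) :
  graded c deg -> (forall i, 0 < deg i)%N -> (0 < K)%N ->
  is_basis_of (inV deg 1) X -> injective Y ->
  (forall k, k \in S <-> exists j, Y j = k) ->
  GP deg (Fph c deg K X S Y i).
Proof.
move=> hg hpos hK hX hY hYS.
have hXV : forall k, inV deg 1 (X k) by case: hX.
rewrite /Fph; apply: GP_bch => //.
  apply: GP_bch => //.
    eapply GP_ext; first exact: (@GP_comb _ _ deg _ _ (fun j t x => t 0 j) (fun j => X (Y j)) (fun j => HP_t R j) (fun j => hXV _)).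
    by move=> t x /=.
  eapply GP_ext; first exact: (@GP_comb _ _ deg n _ (fun j t x => x) (fun j : 'I_1 => X i) (fun j => HP_x R n) (fun j => hXV _)).
  by move=> t x /=; rewrite big_ord1.
apply: GPN.
eapply GP_ext; first exact: (@GP_comb _ _ deg _ _ (fun j t x => t 0 j + (Y j == i)%:R * x) (fun j => X (Y j)) (fun j => HPD (HP_t R j) (HPZ _ (HP_x R n))) (fun j => hXV _)).
move=> t x /=; rewrite aS_X // /eS; apply: eq_bigr => j _.
by rewrite !mxE mulrC.
Qed.

Lemma prod_count (R : realType) n (f : 'I_n -> R) (vs : seq 'I_n) :
  \prod_(v <- vs) f v = \prod_(j < n) f j ^+ count_mem j vs.
Proof.
elim: vs => [|v vs IH]; first by rewrite big_nil big1 // => j _; rewrite expr0.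
rewrite big_cons IH /=.
under [RHS]eq_bigr => j _ do rewrite exprD.
rewrite big_split /=; congr (_ * _).
rewrite (bigD1 v) //= eqxx expr1 big1 ?mulr1 // => j hj.
by rewrite eq_sym (negbTE hj) expr0.
Qed.

Lemma sum_count n (vs : seq 'I_n) : (\sum_(j < n) count_mem j vs)%N = size vs.
Proof.
elim: vs => [|v vs IH]; first by rewrite big1.
rewrite /= big_split /= IH (bigD1 v) //= eqxx big1 ?addn0 // => j hj.
by rewrite eq_sym (negbTE hj).
Qed.

Lemma homog_of_list (R : realType) n k (L : seq (R * seq 'I_n)) (P : 'rV[R]_n -> R) :
  all (fun e => size e.2 == k) L ->
  (forall t, P t = \sum_(e <- L) e.1 * \prod_(v <- e.2) t 0 v) -> homog_poly k P.
Proof.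
move=> hL hP.
pose cv (vs : seq 'I_n) : {ffun 'I_n -> 'I_k.+1} := [ffun j => inord (count_mem j vs)].
have cvE : forall e, e \in L -> forall j, (cv e.2 j : nat) = count_mem j e.2.
  move=> e he j; rewrite ffunE inordK // ltnS.
  move/allP: hL => /(_ e he) /eqP <-.
  by rewrite -sum_count (bigD1 j) //= leq_addr.
exists (fun a => \sum_(e <- L | cv e.2 == a) e.1) => t.
rewrite hP.
under [RHS]eq_bigr => a _ do rewrite big_mkcond mulr_suml.
rewrite exchange_big /=.
rewrite big_seq_cond [RHS]big_seq_cond; apply: eq_bigr => e /andP [he _].
rewrite (bigD1 (cv e.2)) /=; last first.
  apply/eqP; rewrite -[RHS](eqP (allP hL e he)) -sum_count.
  by apply: eq_bigr => j _; rewrite cvE.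
rewrite eqxx [X in _ = _ + X]big1 ?addr0; last first.
  by move=> a /andP [_ ha]; rewrite eq_sym (negbTE ha) mul0r.
congr (_ * _); rewrite prod_count; apply: eq_bigr => j _.
by rewrite cvE.
Qed.

Lemma HP_deriv (R : realType) n k (P : 'rV[R]_n -> R -> R) :
  HP k P -> exists Q : 'rV[R]_n -> R,
    (forall t, is_derive (0 : R) (1 : R) (P t) (Q t)) /\ homog_poly k.-1 Q.
Proof.
move=> [L [hL hP]].
pose pol (t : 'rV[R]_n) : {poly R} := \sum_(e <- L) (e.1.1 * \prod_(v <- e.1.2) t 0 v) *: 'X^(e.2).
exists (fun t => (pol t)^`().[0]); split.
  move=> t.
  have -> : P t = horner (pol t).
    apply/funext => x; rewrite hP /pol horner_sum; apply: eq_bigr => e _.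
    by rewrite hornerZ hornerXn.
  exact: is_derive_poly.
apply: (@homog_of_list _ _ _ [seq (e.1.1, e.1.2) | e <- L & e.2 == 1%N]).
  rewrite all_map; apply/allP => e; rewrite mem_filter => /andP [/eqP e1 he] /=.
  by move/allP: hL => /(_ e he) /eqP <-; rewrite e1 addn1.
move=> t; rewrite horner_coef0 coef_deriv /pol coef_sumMXn big_map big_filter.
by rewrite mulr1n.
Qed.

Lemma cRe_mul (R : realType) (z w : R[i]) : cRe (z * w) = cRe z * cRe w - cIm z * cIm w.
Proof. by case: z => a b; case: w => c e. Qed.
Lemma cIm_mul (R : realType) (z w : R[i]) : cIm (z * w) = cRe z * cIm w + cIm z * cRe w.
Proof. by case: z => a b; case: w => c e. Qed.

Lemma core (R : realType) (th : R -> R) (ph : R) (h : R -> R[i]) :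
  th 0 = 0 -> is_derive (0 : R) (1 : R) th ph ->
  derivable (fun x => cRe (h x)) 0 1 -> derivable (fun x => cIm (h x)) 0 1 ->
  cderive (fun x => expi (th x) * h x) 0 = cderive h 0 + iC ph * h 0.
Proof.
move=> th0 dth dr di.
have dcos : is_derive (0 : R) (1 : R) (cos \o th) (- sin (th 0) * ph).
  exact: (is_derive1_comp (is_derive_cos (th 0)) dth).
have dsin : is_derive (0 : R) (1 : R) (sin \o th) (cos (th 0) * ph).
  exact: (is_derive1_comp (is_derive_sin (th 0)) dth).
have Dr := derivableP dr. have Di := derivableP di.
have ER : (fun x => cRe (expi (th x) * h x)) =
          ((cos \o th) * (fun x => cRe (h x)) - (sin \o th) * (fun x => cIm (h x)))%R.
  by apply/funext => x; rewrite cRe_mul.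
have EI : (fun x => cIm (expi (th x) * h x)) =
          ((cos \o th) * (fun x => cIm (h x)) + (sin \o th) * (fun x => cRe (h x)))%R.
  by apply/funext => x; rewrite cIm_mul.
rewrite /cderive ER EI !derive1E.
rewrite (@derive_val _ _ _ _ _ _ _ (is_deriveB (is_deriveM dcos Dr) (is_deriveM dsin Di))).
rewrite (@derive_val _ _ _ _ _ _ _ (is_deriveD (is_deriveM dcos Di) (is_deriveM dsin Dr))).
rewrite /= th0 cos0 sin0.
case: (h 0) => a b /=.
congr Complex; rewrite /GRing.scale /=; ring.
Qed.

Lemma dpi_S (R : realType) d (c : 'I_d -> 'I_d -> 'rV[R]_d) (deg : 'I_d -> nat) K p
  (X : 'I_p -> 'rV[R]_d) (S : {set 'I_p}) n (Y : 'I_n -> 'I_p) (nu : 'rV[R]_d) (j : 'I_n)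
  (g : 'rV[R]_n -> R[i]) (t : 'rV[R]_n) (ph : R) :
  (forall tau, aS c deg K X S Y (tau *: X (Y j)) = tau *: delta_mx 0 j) ->
  lf nu (Fph c deg K X S Y (Y j) t 0) = 0 ->
  is_derive (0:R) (1:R) (fun tau : R => lf nu (Fph c deg K X S Y (Y j) t tau)) ph ->
  derivable (fun tau : R => cRe (g (t + tau *: delta_mx 0 j))) 0 1 ->
  derivable (fun tau : R => cIm (g (t + tau *: delta_mx 0 j))) 0 1 ->
  dpi c deg K X S Y nu (X (Y j)) g t = partial j g t + iC ph * g t.
Proof.
move=> haS h0 hd dr di.
rewrite /dpi.
have -> : (fun tau : R => Defs.pi c deg K X S Y nu (tau *: X (Y j)) g t) =
          (fun tau : R => expi (lf nu (Fph c deg K X S Y (Y j) t tau)) * g (t + tau *: delta_mx 0 j)).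
  by apply/funext => tau; rewrite /Defs.pi /Fph !haS.
by rewrite core // scale0r addr0.
Qed.

Lemma dpi_nS (R : realType) d (c : 'I_d -> 'I_d -> 'rV[R]_d) (deg : 'I_d -> nat) K p
  (X : 'I_p -> 'rV[R]_d) (S : {set 'I_p}) n (Y : 'I_n -> 'I_p) (nu : 'rV[R]_d) (i : 'I_p)
  (g : 'rV[R]_n -> R[i]) (t : 'rV[R]_n) (ph : R) :
  (forall tau, aS c deg K X S Y (tau *: X i) = 0) ->
  lf nu (Fph c deg K X S Y i t 0) = 0 ->
  is_derive (0:R) (1:R) (fun tau : R => lf nu (Fph c deg K X S Y i t tau)) ph ->
  dpi c deg K X S Y nu (X i) g t = iC ph * g t.
Proof.
move=> haS h0 hd.
rewrite /dpi.
have -> : (fun tau : R => Defs.pi c deg K X S Y nu (tau *: X i) g t) =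
          (fun tau : R => expi (lf nu (Fph c deg K X S Y i t tau)) * (fun _ => g t) tau).
  by apply/funext => tau; rewrite /Defs.pi /Fph !haS addr0.
rewrite core //.
  rewrite /cderive !derive1E.
  rewrite (@derive_val _ _ _ _ _ _ _ (is_derive_cst (cRe (g t)) (0:R) (1:R))).
  rewrite (@derive_val _ _ _ _ _ _ _ (is_derive_cst (cIm (g t)) (0:R) (1:R))).
  by case: (iC ph * g t) => a b; rewrite /=; congr Complex; rewrite add0r.
Qed.

Lemma homog_ext (R : realType) n k (P Q : 'rV[R]_n -> R) :
  homog_poly k P -> (forall t, P t = Q t) -> homog_poly k Q.
Proof. by move=> [cf h] e; exists cf => t; rewrite -e. Qed.

Lemma homog0 (R : realType) n k : homog_poly k (fun _ : 'rV[R]_n => 0).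
Proof. by exists (fun _ => 0) => t; rewrite big1 // => a _; rewrite mul0r. Qed.

Lemma homog_derivable (R : realType) n k (P : 'rV[R]_n -> R) (t v : 'rV[R]_n) :
  homog_poly k P -> derivable (fun tau : R => P (t + tau *: v)) 0 1.
Proof.
move=> [cf hP].
pose q : {poly R} := \sum_(a : {ffun 'I_n -> 'I_k.+1} | (\sum_(j < n) (a j : nat))%N == k)
   cf a *: \prod_(j < n) ((t 0 j)%:P + v 0 j *: 'X) ^+ a j.
have -> : (fun tau : R => P (t + tau *: v)) = horner q.
  apply/funext => tau; rewrite hP /q horner_sum; apply: eq_bigr => a _.
  rewrite hornerZ horner_prod; congr (_ * _); apply: eq_bigr => j _.
  by rewrite horner_exp !mxE hornerD hornerC hornerZ hornerX mulrC.
exact: (@ex_derive _ _ _ _ _ _ _ (is_derive_poly q 0)).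
Qed.

Lemma lf_lin (R : realType) d (l1 l2 x : 'rV[R]_d) a b :
  lf (a *: l1 + b *: l2) x = a * lf l1 x + b * lf l2 x.
Proof.
rewrite /lf !mulr_sumr -big_split; apply: eq_bigr => i _; rewrite !mxE /=; ring.
Qed.

Lemma lf0 (R : realType) d (l : 'rV[R]_d) : lf l 0 = 0.
Proof. by rewrite /lf big1 // => i _; rewrite mxE mul0r. Qed.

Lemma Fph0 (R : realType) d (c : 'I_d -> 'I_d -> 'rV[R]_d) (deg : 'I_d -> nat) K
  p (X : 'I_p -> 'rV[R]_d) (S : {set 'I_p}) n (Y : 'I_n -> 'I_p) (i : 'I_p) (t : 'rV[R]_n) :
  graded c deg -> (forall i, 0 < deg i)%N -> (0 < K)%N ->
  is_basis_of (inV deg 1) X -> injective Y ->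
  (forall k, k \in S <-> exists j, Y j = k) -> (forall x, br c x x = 0) ->
  Fph c deg K X S Y i t 0 = 0.
Proof.
move=> hg hpos hK hX hY hYS hxx.
rewrite /Fph aS_X //.
have -> : \row_j (0 * (Y j == i)%:R) = 0 :> 'rV[R]_n by apply/rowP => j; rewrite !mxE mul0r.
rewrite addr0 scale0r -(scale0r (eS X Y t)) bch_coll // scale0r addr0.
by rewrite -scaleN1r bch_coll // scaleN1r subrr.
Qed.

Lemma cRe_Dphi (R : realType) n (j : 'I_n) (ph : 'rV[R]_n -> R) f u :
  cRe (Dphi j ph f u) = cRe (partial j f u) - ph u * cIm (f u).
Proof. by rewrite /Dphi; case: (partial j f u) => a b; case: (f u) => e g /=; ring. Qed.

Lemma cIm_Dphi (R : realType) n (j : 'I_n) (ph : 'rV[R]_n -> R) f u :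
  cIm (Dphi j ph f u) = cIm (partial j f u) + ph u * cRe (f u).
Proof. by rewrite /Dphi; case: (partial j f u) => a b; case: (f u) => e g /=; ring. Qed.

Lemma iC_iC (R : realType) (a : R) (z : R[i]) : iC a * (iC a * z) = - (rC (a ^+ 2) * z).
Proof. by case: z => x y /=; congr Complex; ring. Qed.

Lemma derivable_lin (R : realType) (A B : R -> R) a b :
  derivable A 0 1 -> derivable B 0 1 -> derivable (fun x : R => a * A x + b * B x) 0 1.
Proof.
move=> hA hB.
have := is_deriveD (is_deriveZ a (derivableP hA)) (is_deriveZ b (derivableP hB)).
move=> /(@ex_derive _ _ _ _ _ _ _) h.
have -> : (fun x : R => a * A x + b * B x) = (a \*: A + b \*: B)%R by apply/funext.
exact: h.
Qed.

Lemma derivable_BM (R : realType) (A B C : R -> R) :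
  derivable A 0 1 -> derivable B 0 1 -> derivable C 0 1 -> derivable (fun x : R => A x - B x * C x) 0 1.
Proof.
move=> hA hB hC.
have := is_deriveB (derivableP hA) (is_deriveM (derivableP hB) (derivableP hC)).
move=> /(@ex_derive _ _ _ _ _ _ _) h.
have -> : (fun x : R => A x - B x * C x) = (A - B * C)%R by apply/funext.
exact: h.
Qed.

Lemma derivable_DM (R : realType) (A B C : R -> R) :
  derivable A 0 1 -> derivable B 0 1 -> derivable C 0 1 -> derivable (fun x : R => A x + B x * C x) 0 1.
Proof.
move=> hA hB hC.
have := is_deriveD (derivableP hA) (is_deriveM (derivableP hB) (derivableP hC)).
move=> /(@ex_derive _ _ _ _ _ _ _) h.
have -> : (fun x : R => A x + B x * C x) = (A + B * C)%R by apply/funext.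
exact: h.
Qed.

Lemma sum_nth2 (I A : Type) (V : zmodType) (E : seq I) (f1 f2 : I -> A) (d1 d2 : A)
  (W : A -> A -> V) N : size E = N ->
  \sum_(i <- E) W (f1 i) (f2 i) = \sum_(k < N) W (nth d1 (map f1 E) k) (nth d2 (map f2 E) k).
Proof.
move=> <-; elim: E => [|x E IH]; first by rewrite big_nil big_ord0.
by rewrite big_cons big_ord_recl IH /=.
Qed.

Lemma homog_nth (R : realType) n k (I : Type) (E : seq I) (f : I -> 'rV[R]_n -> R) (k' : nat) :
  (forall i, homog_poly k (f i)) -> homog_poly k (nth (fun _ => 0) (map f E) k').
Proof.
move=> h; elim: E k' => [|x E IH] [|k'] //=; exact: homog0.
Qed.

Unset Implicit Arguments.
Theorem theorem2p1
  (R : realType)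
  (* the stratified Lie algebra n = R^d, with structure constants c and grading deg *)
  (d : nat) (c : 'I_d -> 'I_d -> 'rV[R]_d) (deg : 'I_d -> nat) (m s : nat)
  (hm : (1 <= m)%N) (hs : (s < m)%N)
  (hlie : lie_algebra c) (hstrat : stratified c deg m)
  (* basis B = {X_1..X_p} of V_1 *)
  (p : nat) (X : 'I_p -> 'rV[R]_d) (hX : is_basis_of (inV deg 1) X)
  (* l1: dual to the basis Z1 of V_(s+1) at index alpha *)
  (q1 : nat) (Z1 : 'I_q1 -> 'rV[R]_d) (alpha : 'I_q1) (l1 : 'rV[R]_d)
  (hZ1 : is_basis_of (inV deg s.+1) Z1)
  (hl1V : forall i, deg i != s.+1 -> l1 0 i = 0)
  (hl1Z : forall j, lf l1 (Z1 j) = (j == alpha)%:R)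
  (* l2: dual to the basis Z2 of V_(m+1) at index beta *)
  (q2 : nat) (Z2 : 'I_q2 -> 'rV[R]_d) (beta : 'I_q2) (l2 : 'rV[R]_d)
  (hZ2 : is_basis_of (inV deg m.+1) Z2)
  (hl2V : forall i, deg i != m.+1 -> l2 0 i = 0)
  (hl2Z : forall j, lf l2 (Z2 j) = (j == beta)%:R)
  (* l_i([V_k, V_j]) = 0 for k, j >= 2 *)
  (hl1br : forall (k j : nat) x y, (2 <= k)%N -> (2 <= j)%N ->
             inV deg k x -> inV deg j y -> lf l1 (br c x y) = 0)
  (hl2br : forall (k j : nat) x y, (2 <= k)%N -> (2 <= j)%N ->
             inV deg k x -> inV deg j y -> lf l2 (br c x y) = 0)
  (* the sets S_1, S_2 *)
  (S1 S2 : {set 'I_p})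
  (hS1 : if s == 1%N then greedy_output c X l1 S1
         else if m == 1%N then S1 = finset.set0
         else support_set c X l1 S1)
  (hS2 : if m == 1%N then greedy_output c X l2 S2
         else support_set c X l2 S2)
  (* an enumeration Y_1..Y_n of S = S_1 u S_2 *)
  (n : nat) (Y : 'I_n -> 'I_p) (hYinj : injective Y)
  (hYS : forall k, k \in S1 :|: S2 <-> exists j, Y j = k)
  (* lambda = lam1 l1 + lam2 l2 *)
  (lam1 lam2 : R) (hlam1 : lam1 != 0) (hlam2 : lam2 != 0) :
  exists (pt qt : 'I_n -> 'rV[R]_n -> R) (pp qq : 'I_(p - n) -> 'rV[R]_n -> R),
    [/\ forall j, homog_poly s (pt j),
        forall j, homog_poly m (qt j),
        forall k, homog_poly s (pp k),
        forall k, homog_poly m (qq k) &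
        forall f : 'rV[R]_n -> R[i], smooth f ->
          forall t : 'rV[R]_n,
            dpiL c deg m.+1 X (S1 :|: S2) Y (lam1 *: l1 + lam2 *: l2) f t =
              \sum_(j < n)
                 Dphi j (fun u => lam1 * pt j u + lam2 * qt j u)
                   (Dphi j (fun u => lam1 * pt j u + lam2 * qt j u) f) t
              - \sum_(k < p - n) rC ((lam2 * qq k t + lam1 * pp k t) ^+ 2) * f t].
Proof.
have [hdeg hg _] := hstrat.
have hpos : forall i, (0 < deg i)%N by move=> i; case/andP: (hdeg i).
have hK : (0 < m.+1)%N by [].
have hxx : forall x, br c x x = 0 := hlie.1.
set S := S1 :|: S2.
set nu := lam1 *: l1 + lam2 *: l2.
have hSY := S_img hYS.
have haS : forall i tau, aS c deg m.+1 X S Y (tau *: X i) = \row_j (tau * (Y j == i)%:R).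
  by move=> i tau; apply: aS_X.
have haSY : forall j tau, aS c deg m.+1 X S Y (tau *: X (Y j)) = tau *: delta_mx 0 j.
  move=> j tau; rewrite haS; apply/rowP => j'; rewrite !mxE (inj_eq hYinj) eq_sym.
  by case: (j == j'); rewrite ?mulr1 ?mulr0.
have haSn : forall i, i \notin S -> forall tau, aS c deg m.+1 X S Y (tau *: X i) = 0.
  move=> i hi tau; rewrite haS; apply/rowP => j; rewrite !mxE.
  case: eqP => [e|_]; last by rewrite mulr0.
  by case/negP: hi; apply/hYS; exists j.
have HP1 : forall i, HP s.+1 (fun t tau => lf l1 (Fph c deg m.+1 X S Y i t tau)).
  by move=> i; exact: (HP_lf (GP_Fph i hg hpos hK hX hYinj hYS) hl1V).
have HP2 : forall i, HP m.+1 (fun t tau => lf l2 (Fph c deg m.+1 X S Y i t tau)).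
  by move=> i; exact: (HP_lf (GP_Fph i hg hpos hK hX hYinj hYS) hl2V).
pose P1 i t := derive1 (fun tau : R => lf l1 (Fph c deg m.+1 X S Y i t tau)) 0.
pose P2 i t := derive1 (fun tau : R => lf l2 (Fph c deg m.+1 X S Y i t tau)) 0.
have D1 : forall i, (forall t, is_derive (0:R) (1:R) (fun tau : R => lf l1 (Fph c deg m.+1 X S Y i t tau)) (P1 i t))
                    /\ homog_poly s (P1 i).
  move=> i; have [Q [hQ hh]] := HP_deriv (HP1 i).
  have e : forall t, P1 i t = Q t.
    by move=> t; rewrite /P1 derive1E (@derive_val _ _ _ _ _ _ _ (hQ t)).
  split; first by move=> t; rewrite e; exact: hQ.
  by apply: homog_ext hh _ => t; rewrite e.
have D2 : forall i, (forall t, is_derive (0:R) (1:R) (fun tau : R => lf l2 (Fph c deg m.+1 X S Y i t tau)) (P2 i t))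
                    /\ homog_poly m (P2 i).
  move=> i; have [Q [hQ hh]] := HP_deriv (HP2 i).
  have e : forall t, P2 i t = Q t.
    by move=> t; rewrite /P2 derive1E (@derive_val _ _ _ _ _ _ _ (hQ t)).
  split; first by move=> t; rewrite e; exact: hQ.
  by apply: homog_ext hh _ => t; rewrite e.
have Dnu : forall i t, is_derive (0:R) (1:R) (fun tau : R => lf nu (Fph c deg m.+1 X S Y i t tau))
                          (lam1 * P1 i t + lam2 * P2 i t).
  move=> i t.
  have := is_deriveD (is_deriveZ lam1 ((D1 i).1 t)) (is_deriveZ lam2 ((D2 i).1 t)).
  have -> : (fun tau : R => lf nu (Fph c deg m.+1 X S Y i t tau)) =
            (lam1 \*: (fun tau : R => lf l1 (Fph c deg m.+1 X S Y i t tau)) +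
             lam2 \*: (fun tau : R => lf l2 (Fph c deg m.+1 X S Y i t tau)))%R.
    by apply/funext => tau; rewrite /nu lf_lin.
  by [].
have Z0 : forall i t, lf nu (Fph c deg m.+1 X S Y i t 0) = 0.
  by move=> i t; rewrite Fph0 // lf0.
pose E := enum (~: S).
exists (fun j => P1 (Y j)), (fun j => P2 (Y j)),
       (fun k => nth (fun _ => 0) (map P1 E) k), (fun k => nth (fun _ => 0) (map P2 E) k).
split.
- by move=> j; exact: (D1 _).2.
- by move=> j; exact: (D2 _).2.
- by move=> k; apply: homog_nth => i; exact: (D1 _).2.
- by move=> k; apply: homog_nth => i; exact: (D2 _).2.
move=> f hf t.
have [_ _ hd0] := hf [::].
have hd1 : forall j t' j', derivable (fun tau : R => cRe (partial j f (t' + tau *: delta_mx 0 j'))) 0 1 /\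
                           derivable (fun tau : R => cIm (partial j f (t' + tau *: delta_mx 0 j'))) 0 1.
  by move=> j; have [_ _ h] := hf [:: j]; exact: h.
rewrite /dpiL (bigID (fun i => i \in S)) /=.
congr (_ + _).
  rewrite (eq_bigl (fun i => i \in Y @: [set: 'I_n])); last by move=> i; rewrite /S hSY.
  rewrite big_imset /=; last by move=> x y _ _; apply: hYinj.
  rewrite (eq_bigl xpredT); last by move=> j; rewrite inE.
  apply: eq_bigr => j _.
  set ph := fun u => lam1 * P1 (Y j) u + lam2 * P2 (Y j) u.
  have inner : dpi c deg m.+1 X S Y nu (X (Y j)) f = Dphi j ph f.
    apply/funext => u; rewrite /Dphi; apply: dpi_S => //.
    - exact: (hd0 u j).1.
    - exact: (hd0 u j).2.
  rewrite inner; apply: dpi_S => //.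
  - rewrite (_ : (fun tau : R => cRe (Dphi j ph f (t + tau *: delta_mx 0 j))) =
       (fun tau : R => cRe (partial j f (t + tau *: delta_mx 0 j)) -
          ph (t + tau *: delta_mx 0 j) * cIm (f (t + tau *: delta_mx 0 j)))); last first.
      by apply/funext => tau; rewrite cRe_Dphi.
    apply: derivable_BM.
    + exact: (hd1 j t j).1.
    + rewrite /ph; apply: derivable_lin; apply: homog_derivable; [exact: (D1 _).2 | exact: (D2 _).2].
    + exact: (hd0 t j).2.
  - rewrite (_ : (fun tau : R => cIm (Dphi j ph f (t + tau *: delta_mx 0 j))) =
       (fun tau : R => cIm (partial j f (t + tau *: delta_mx 0 j)) +
          ph (t + tau *: delta_mx 0 j) * cRe (f (t + tau *: delta_mx 0 j)))); last first.
      by apply/funext => tau; rewrite cIm_Dphi.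
    apply: derivable_DM.
    + exact: (hd1 j t j).2.
    + rewrite /ph; apply: derivable_lin; apply: homog_derivable; [exact: (D1 _).2 | exact: (D2 _).2].
    + exact: (hd0 t j).1.
transitivity (\sum_(i < p | i \notin S) - (rC ((lam2 * P2 i t + lam1 * P1 i t) ^+ 2) * f t)).
  apply: eq_bigr => i hi.
  have inner : dpi c deg m.+1 X S Y nu (X i) f = fun u => iC (lam1 * P1 i u + lam2 * P2 i u) * f u.
    by apply/funext => u; apply: dpi_nS => //; exact: haSn.
  rewrite inner (dpi_nS _ (haSn i hi) (Z0 i t) (Dnu i t)) iC_iC.
  by rewrite addrC.
rewrite sumrN; congr (- _).
have hcard : #|S| = n.
  by rewrite /S hSY card_imset // cardsT card_ord.
have hsize : size E = (p - n)%N.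
  have hc := cardsC S; rewrite card_ord hcard in hc.
  have e : (p - n)%N = #|~: S| by rewrite -{1}hc addKn.
  by rewrite e /E cardE.
have := @sum_nth2 'I_p ('rV[R]_n -> R) _ E P1 P2 (fun _ => 0) (fun _ => 0)
   (fun a b => rC ((lam2 * b t + lam1 * a t) ^+ 2) * f t) (p - n)%N hsize.
move=> /= <-.
by rewrite /E big_enum /=; apply: eq_bigl => i; rewrite !inE.
Qed.
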